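(* Let $\lambda$ be counting measure on $\mathbb{N}$, and let $X_1(\lambda),X_2(\lambda),Y_1(\lambda),Y_2(\lambda)$ be saturated Banach sequence spaces in each of which the unit vectors $(e^n)$ form a Schauder basis; assume also that $(e^n)$ is a Schauder basis of $Y_1(\lambda)'$. Let $T\colon X_1(\lambda)\to Y_1(\lambda)$ and $S\colon X_2(\lambda)\to Y_2(\lambda)$ be nontrivial continuous linear operators with matrices $a_{ij}=T(e^j)_i$ and $b_{ij}=S(e^j)_i$. Assume that $Y_2^{Y_1''}$ is saturated and that $Y_2(\lambda)$ or $Y_1(\lambda)'$ is $\sigma$-order continuous. Given $h=(h_j)\in X_1^{X_2}$, the following are equivalent: (a) $T$ factors strongly through $S$ and $M_h$, i.e. there exists $g\in Y_2^{Y_1''}$ with $T(x)=g\,S(hx)$ for all $x\in X_1(\lambda)$. (b) There exists $g=(g_i)\in Y_2^{Y_1''}$ such that $a_{ij}/b_{ij}=g_ih_j$ whenever $b_{ij}\ne0$, and $a_{ij}=0$ whenever $b_{ij}=0$. (c) There exists $C>0$ such that $$\sum_{i=1}^n\sum_{j=1}^m r_{ij}a_{ij}\le C\Big\Vert\sum_{i=1}^n\Big(\sum_{j=1}^m h_jr_{ij}b_{ij}\Big)e^i\Big\Vert_{Y_2\pi Y_1'}$$ for all $n,m\in\mathbb{N}$ and all real $(r_{ij})$ with $|r_{ij}|\le1$. Moreover, if $Y_2(\lambda)\subset Y_1(\lambda)''$, then the condition (d) there exists $C>0$ such that $\sum_{j=1}^m r_ja_{nj}\le C\big|\sum_{j=1}^m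 h_jr_jb_{nj}\big|$ for all $n,m\in\mathbb{N}$ and all real $(r_j)$ with $|r_j|\le1$ implies (a)–(c). If moreover $Y_2^{Y_1''}=\ell^\infty$, then (d) is equivalent to (a)–(c).
   Context: A Banach sequence space is a Banach function space over counting measure on $\mathbb{N}$: a Banach space of real sequences such that $|x|\le|y|$ coordinatewise with $y$ in the space implies $x$ in the space and $\Vert x\Vert\le\Vert y\Vert$; saturated means for each $n$ some element has nonzero $n$-th coordinate; $\sigma$-order continuous means $x_k\downarrow0$ coordinatewise implies $\Vert x_k\Vert\downarrow0$. $X^Y=\{h: hx\in Y\ \forall x\in X\}$ with norm $\sup_{x\in B_X}\Vert hx\Vert_Y$; $X'=X^{\ell^1}$ (Köthe dual), $X''=(X')'$. The $\pi$-product $X\pi Y$ is the space of $h$ with $|h|\le\sum_n|f_ng_n|$ for some $f_n\in X$, $g_n\in Y$, $\sum_n\Vert f_n\Vert_X\Vert g_n\Vert_Y<\infty$, with norm the infimum of $\sum_n\Vert f_n\Vert_X\Vert g_n\Vert_Y$. *)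

(* Defs.v *)
From Stdlib Require Import Reals.
From Coquelicot Require Import Coquelicot.
Open Scope R_scope.

(* Real sequences indexed by nat (counting measure on N; index 0 plays the
   role of the paper's index 1). *)
Definition seq := nat -> R.

Record sspace := SSpace { smem : seq -> Prop; snorm : seq -> R }.

Definition zero_seq : seq := fun _ => 0.
Definition sadd (x y : seq) : seq := fun i => x i + y i.
Definition sscal (c : R) (x : seq) : seq := fun i => c * x i.
Definition ssub (x y : seq) : seq := fun i => x i - y i.
Definition smul (x y : seq) : seq := fun i => x i * y i.

Definition unitv (n : nat) : seq := fun i => if Nat.eqb i n then 1 else 0.

Fixpoint fsum (n : nat) (f : nat -> R) : R :=
  match n with O => 0 | S k => fsum k f + f k end.

Definition fsum_seq (K : nat) (a : nat -> R) (b : nat -> seq) : seq :=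
  fun i => fsum K (fun k => a k * b k i).

Definition BSS (X : sspace) : Prop :=
  smem X zero_seq /\
  (forall x y, smem X x -> smem X y -> smem X (sadd x y)) /\
  (forall c x, smem X x -> smem X (sscal c x)) /\
  (forall x, smem X x -> 0 <= snorm X x) /\
  (forall x, smem X x -> snorm X x = 0 -> x = zero_seq) /\
  (forall c x, smem X x -> snorm X (sscal c x) = Rabs c * snorm X x) /\
  (forall x y, smem X x -> smem X y ->
     snorm X (sadd x y) <= snorm X x + snorm X y) /\
  (forall x y, smem X y -> (forall i, Rabs (x i) <= Rabs (y i)) ->
     smem X x /\ snorm X x <= snorm X y) /\
  (forall xs : nat -> seq, (forall k, smem X (xs k)) ->
     (forall eps, 0 < eps -> exists N, forall p q, (N <= p)%nat -> (N <= q)%nat ->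
        snorm X (ssub (xs p) (xs q)) < eps) ->
     exists x, smem X x /\
       (forall eps, 0 < eps -> exists N, forall p, (N <= p)%nat ->
          snorm X (ssub (xs p) x) < eps)).

Definition saturated (X : sspace) : Prop :=
  forall n : nat, exists x, smem X x /\ x n <> 0.

Definition sigma_order_continuous (X : sspace) : Prop :=
  forall xs : nat -> seq, (forall k, smem X (xs k)) ->
    (forall k i, 0 <= xs (S k) i <= xs k i) ->
    (forall i, is_lim_seq (fun k => xs k i) 0) ->
    is_lim_seq (fun k => snorm X (xs k)) 0.

Definition schauder_basis (X : sspace) (b : nat -> seq) : Prop :=
  (forall n, smem X (b n)) /\
  forall x, smem X x ->
    exists! a : nat -> R,
      forall eps, 0 < eps -> exists N, forall K, (N <= K)%nat ->
        snorm X (ssub x (fsum_seq K a b)) < eps.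

Definition l1 : sspace :=
  SSpace (fun x => ex_series (fun n => Rabs (x n)))
         (fun x => Series (fun n => Rabs (x n))).

Definition mult_space (X Y : sspace) : sspace :=
  SSpace (fun h => forall x, smem X x -> smem Y (smul h x))
         (fun h => real (Lub_Rbar (fun r => exists x, smem X x /\
                     snorm X x <= 1 /\ r = snorm Y (smul h x)))).

Definition kothe (X : sspace) : sspace := mult_space X l1.

Definition abs_series (u : nat -> R) : Rbar :=
  Lub_Rbar (fun s => exists N, s = fsum N (fun n => Rabs (u n))).

Definition pi_rep (X Y : sspace) (h : seq) (f g : nat -> seq) : Prop :=
  (forall n, smem X (f n)) /\ (forall n, smem Y (g n)) /\
  ex_series (fun n => snorm X (f n) * snorm Y (g n)) /\
  (forall i, Rbar_le (Finite (Rabs (h i))) (abs_series (fun n => f n i * g n i))).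

Definition pi_mem (X Y : sspace) (h : seq) : Prop :=
  exists f g, pi_rep X Y h f g.

(* pi-norm, +oo if h is not in X pi Y *)
Definition pi_norm (X Y : sspace) (h : seq) : Rbar :=
  Glb_Rbar (fun c => exists f g, pi_rep X Y h f g /\
              c = Series (fun n => snorm X (f n) * snorm Y (g n))).

Definition bounded_linear (X Y : sspace) (T : seq -> seq) : Prop :=
  (forall x, smem X x -> smem Y (T x)) /\
  (forall x y, smem X x -> smem X y -> T (sadd x y) = sadd (T x) (T y)) /\
  (forall c x, smem X x -> T (sscal c x) = sscal c (T x)) /\
  (exists K, forall x, smem X x -> snorm Y (T x) <= K * snorm X x).

Definition nontrivial_op (X : sspace) (T : seq -> seq) : Prop :=
  exists x, smem X x /\ T x <> zero_seq.

Definition op_matrix (T : seq -> seq) (i j : nat) : R := T (unitv j) i.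

(* Main.v *)
Require Import Defs.
From Stdlib Require Import Reals.
From Coquelicot Require Import Coquelicot.
From Stdlib Require Import Lra Lia FunctionalExtensionality Classical IndefiniteDescription ZArith.
Open Scope R_scope.

Lemma fsum_ext n f g : (forall k, (k < n)%nat -> f k = g k) -> fsum n f = fsum n g.
Proof. induction n; simpl; intros H; auto. rewrite IHn; [rewrite H|]; auto; intros; apply H; lia. Qed.

Lemma fsum_plus n f g : fsum n (fun k => f k + g k) = fsum n f + fsum n g.
Proof. induction n; simpl; [lra|]. rewrite IHn; lra. Qed.

Lemma fsum_scal n c f : fsum n (fun k => c * f k) = c * fsum n f.
Proof. induction n; simpl; [lra|]. rewrite IHn; lra. Qed.

Lemma fsum_zero n f : (forall k, (k < n)%nat -> f k = 0) -> fsum n f = 0.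
Proof. intros H. rewrite (fsum_ext n f (fun _ => 0)); auto. induction n; simpl; [lra|]. rewrite IHn; [lra|]. intros; apply H; lia. Qed.

Lemma fsum_le n f g : (forall k, (k < n)%nat -> f k <= g k) -> fsum n f <= fsum n g.
Proof. induction n; simpl; intros H; [lra|]. assert (fsum n f <= fsum n g) by (apply IHn; intros; apply H; lia). specialize (H n ltac:(lia)). lra. Qed.

Lemma fsum_nonneg n f : (forall k, 0 <= f k) -> 0 <= fsum n f.
Proof. intros H; induction n; simpl; [lra|]. specialize (H n); lra. Qed.

Lemma fsum_mono n p f : (forall k, 0 <= f k) -> (n <= p)%nat -> fsum n f <= fsum p f.
Proof. intros H Hp; induction Hp; simpl; [lra|]. specialize (H m); lra. Qed.

Lemma fsum_ge_term n f k : (forall k, 0 <= f k) -> (k < n)%nat -> f k <= fsum n f.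
Proof. intros H Hk. apply Rle_trans with (fsum (S k) f). simpl. pose proof (fsum_nonneg k f H); lra. apply fsum_mono; auto. Qed.

Lemma fsum_abs n f : Rabs (fsum n f) <= fsum n (fun k => Rabs (f k)).
Proof. induction n; simpl. rewrite Rabs_R0; lra. eapply Rle_trans; [apply Rabs_triang|]. lra. Qed.

Lemma fsum_swap n K (F : nat -> nat -> R) :
  fsum n (fun i => fsum K (fun k => F i k)) = fsum K (fun k => fsum n (fun i => F i k)).
Proof. induction n; simpl. symmetry; apply fsum_zero; auto. rewrite IHn. rewrite <- fsum_plus. reflexivity. Qed.

Lemma fsum_single n j u (f : nat -> R) : (j < n)%nat ->
  fsum n (fun k => (if Nat.eqb k j then u else 0) * f k) = u * f j.
Proof. induction n; intros H; [lia|]. simpl. destruct (Nat.eqb_spec n j).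
 - subst. rewrite fsum_zero. lra. intros k Hk. destruct (Nat.eqb_spec k j); [lia|lra].
 - rewrite IHn; [|lia]. lra. Qed.

Lemma fsum_unitv n F k : fsum n (fun i => F i * unitv i k) = if Nat.ltb k n then F k else 0.
Proof. unfold unitv. induction n; simpl. reflexivity. rewrite IHn.
 destruct (Nat.eqb_spec k n); destruct (Nat.ltb_spec k n); destruct (Nat.ltb_spec k (S n)); subst; try lia; try lra. Qed.

Lemma fsum_Sn_sum n f : fsum (S n) f = sum_n f n.
Proof. induction n. simpl. rewrite sum_O. lra. change (fsum (S (S n)) f) with (fsum (S n) f + f (S n)). rewrite IHn, sum_Sn. reflexivity. Qed.

Lemma series_lim a l : is_series a l <-> is_lim_seq (fun N => fsum N a) (Finite l).
Proof.
  split; intros H.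
  - apply is_lim_seq_incr_1. eapply is_lim_seq_ext; [|exact H]. intros n. simpl. rewrite <- fsum_Sn_sum. reflexivity.
  - apply is_lim_seq_incr_1 in H. unfold is_series. 
    change (is_lim_seq (sum_n a) (Finite l)). eapply is_lim_seq_ext; [|exact H]. intros n. rewrite <- fsum_Sn_sum. reflexivity.
Qed.

Lemma series_ge_fsum a N : (forall n, 0 <= a n) -> ex_series a -> fsum N a <= Series a.
Proof.
  intros Hp He. apply Series_correct in He. apply series_lim in He.
  apply (is_lim_seq_incr_compare _ _ He). intros n; simpl; specialize (Hp n); lra.
Qed.

Lemma ex_series_bounded a B : (forall n, 0 <= a n) -> (forall N, fsum N a <= B) ->
  ex_series a /\ Series a <= B.
Proof.
  intros Hp HB.
  destruct (ex_finite_lim_seq_incr (fun N => fsum N a) B) as [l Hl]; auto.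
  intros n; simpl; specialize (Hp n); lra.
  assert (Hs : is_series a l) by (apply series_lim; auto).
  split. exists l; auto.
  rewrite (is_series_unique _ _ Hs).
  assert (Rbar_le l B). { eapply is_lim_seq_le. 2: exact Hl. 2: apply is_lim_seq_const. intros; simpl; auto. }
  exact H.
Qed.

Lemma series_single a i : (forall n, n <> i -> a n = 0) -> ex_series a /\ Series a = a i.
Proof.
  intros H. assert (Hs : is_series a (a i)).
  { apply series_lim. apply is_lim_seq_ext_loc with (fun _ => a i). exists (S i). intros n Hn.
    symmetry. clear -H Hn. induction Hn. simpl. rewrite fsum_zero. lra. intros; apply H; lia.
    simpl. rewrite IHHn, (H m); [lra|lia]. apply is_lim_seq_const. }
  split. exists (a i); auto. apply is_series_unique; auto.
Qed.

Lemma series_zero : ex_series (fun _ : nat => 0) /\ Series (fun _ : nat => 0) = 0.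
Proof. apply (series_single (fun _ => 0) 0). intros; reflexivity. Qed.

Lemma fsum_series N (F : nat -> nat -> R) : (forall i, ex_series (F i)) ->
  ex_series (fun k => fsum N (fun i => F i k)) /\
  Series (fun k => fsum N (fun i => F i k)) = fsum N (fun i => Series (F i)).
Proof.
  intros H. induction N; simpl.
  - apply series_zero.
  - destruct IHN as [E1 E2]. split.
    + apply (ex_series_plus _ _ E1 (H N)).
    + rewrite Series_plus; auto. rewrite E2; auto.
Qed.

Lemma series_le_gen a b : (forall n, 0 <= a n <= b n) -> ex_series b -> ex_series a /\ Series a <= Series b.
Proof.
  intros H Hb. split. apply (ex_series_le a b); auto. intros n. unfold norm; simpl. unfold abs; simpl. rewrite Rabs_pos_eq; apply H.
  apply Series_le; auto.
Qed.

Section BSSfacts.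
Variable X : sspace.
Hypothesis HX : BSS X.

Lemma bss_zero : smem X zero_seq. Proof. apply HX. Qed.
Lemma bss_add x y : smem X x -> smem X y -> smem X (sadd x y). Proof. apply HX. Qed.
Lemma bss_scal c x : smem X x -> smem X (sscal c x). Proof. apply HX. Qed.
Lemma bss_nn x : smem X x -> 0 <= snorm X x. Proof. apply HX. Qed.
Lemma bss_def x : smem X x -> snorm X x = 0 -> x = zero_seq. Proof. apply HX. Qed.
Lemma bss_hom c x : smem X x -> snorm X (sscal c x) = Rabs c * snorm X x. Proof. apply HX. Qed.
Lemma bss_tri x y : smem X x -> smem X y -> snorm X (sadd x y) <= snorm X x + snorm X y. Proof. apply HX. Qed.
Lemma bss_ideal x y : smem X y -> (forall i, Rabs (x i) <= Rabs (y i)) -> smem X x /\ snorm X x <= snorm X y.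
Proof. apply HX. Qed.
Lemma bss_complete (xs : nat -> seq) : (forall k, smem X (xs k)) ->
     (forall eps, 0 < eps -> exists N, forall p q, (N <= p)%nat -> (N <= q)%nat ->
        snorm X (ssub (xs p) (xs q)) < eps) ->
     exists x, smem X x /\
       (forall eps, 0 < eps -> exists N, forall p, (N <= p)%nat ->
          snorm X (ssub (xs p) x) < eps).
Proof. apply HX. Qed.

Lemma norm_zero : snorm X zero_seq = 0.
Proof. replace zero_seq with (sscal 0 zero_seq). rewrite bss_hom by apply bss_zero. rewrite Rabs_R0; lra.
 apply functional_extensionality; intros; unfold sscal, zero_seq; lra. Qed.

Lemma ssub_eq x y : ssub x y = sadd x (sscal (-1) y).
Proof. apply functional_extensionality; intros; unfold ssub, sadd, sscal; lra. Qed.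

Lemma ssub_mem x y : smem X x -> smem X y -> smem X (ssub x y).
Proof. intros; rewrite ssub_eq; apply bss_add; auto; apply bss_scal; auto. Qed.

Lemma ssub_sym x y : smem X x -> smem X y -> snorm X (ssub x y) = snorm X (ssub y x).
Proof. intros. replace (ssub x y) with (sscal (-1) (ssub y x)). rewrite bss_hom. replace (Rabs (-1)) with 1 by (rewrite Rabs_left; lra); lra.
 apply ssub_mem; auto. apply functional_extensionality; intros; unfold ssub, sscal; lra. Qed.

Lemma abs_mem x : smem X x -> smem X (fun i => Rabs (x i)) /\ snorm X (fun i => Rabs (x i)) <= snorm X x.
Proof. intros; apply bss_ideal; auto. intros; rewrite Rabs_Rabsolu; lra. Qed.

Lemma unitv_pos i : smem X (unitv i) -> 0 < snorm X (unitv i).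
Proof. intros H. destruct (bss_nn _ H) as [|E]; auto. apply bss_def in H; auto.
 exfalso. assert (unitv i i = zero_seq i) by (rewrite H; auto). unfold unitv, zero_seq in H0. rewrite Nat.eqb_refl in H0. lra. Qed.

Lemma coord_bound i x : smem X (unitv i) -> smem X x -> Rabs (x i) * snorm X (unitv i) <= snorm X x.
Proof. intros Hu Hx. rewrite <- bss_hom by auto. apply (bss_ideal (sscal (x i) (unitv i)) x Hx).
 intros k. unfold sscal, unitv. destruct (Nat.eqb_spec k i). subst. rewrite Rmult_1_r; lra.
 rewrite Rmult_0_r, Rabs_R0. apply Rabs_pos. Qed.

Lemma lim_coord i (s : nat -> seq) y : smem X (unitv i) -> (forall p, smem X (s p)) -> smem X y ->
  (forall eps, 0 < eps -> exists N, forall p, (N <= p)%nat -> snorm X (ssub (s p) y) < eps) ->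
  is_lim_seq (fun p => s p i) (y i).
Proof.
  intros Hu Hs Hy Hc. apply is_lim_seq_Reals. intros eps Heps.
  pose proof (unitv_pos i Hu) as Hp.
  destruct (Hc (eps * snorm X (unitv i))) as [N HN]. apply Rmult_lt_0_compat; auto.
  exists N. intros n Hn. unfold R_dist. specialize (HN n Hn).
  pose proof (coord_bound i (ssub (s n) y) Hu (ssub_mem _ _ (Hs n) Hy)). unfold ssub at 1 in H.
  apply Rmult_lt_reg_r with (snorm X (unitv i)); auto. lra.
Qed.
End BSSfacts.

Lemma hump X (HX : BSS X) (Hu : forall i, smem X (unitv i)) (ys : nat -> seq)
  (Hy : forall k, smem X (ys k)) (Hn : forall k, snorm X (ys k) <= 1) :
  exists Y, smem X Y /\ forall k i, (/2)^k * Rabs (ys k i) <= Y i.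
Proof.
  set (s := fun p => fun i => fsum p (fun k => (/2)^k * Rabs (ys k i))).
  assert (sS : forall p, s (S p) = sadd (s p) (sscal ((/2)^p) (fun i => Rabs (ys p i)))) by reflexivity.
  assert (Hs : forall p, smem X (s p)).
  { induction p. replace (s 0%nat) with zero_seq by reflexivity. apply bss_zero; auto.
    rewrite sS. apply bss_add; auto. apply bss_scal; auto. apply abs_mem; auto. }
  assert (Hb : forall p q, (p <= q)%nat -> snorm X (ssub (s q) (s p)) <= 2*(/2)^p - 2*(/2)^q).
  { intros p q Hpq. induction Hpq.
    - replace (ssub (s p) (s p)) with zero_seq. rewrite norm_zero; auto. lra.
      apply functional_extensionality; intros; unfold ssub, zero_seq; lra.
    - replace (ssub (s (S m)) (s p)) with (sadd (ssub (s m) (s p)) (sscal ((/2)^m) (fun i => Rabs (ys m i)))).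
      2:{ apply functional_extensionality; intros; rewrite sS; unfold sadd, ssub, sscal; lra. }
      eapply Rle_trans. apply bss_tri; auto. apply ssub_mem; auto. apply bss_scal; auto. apply abs_mem; auto.
      rewrite bss_hom; auto. 2: apply abs_mem; auto.
      pose proof (proj2 (abs_mem X HX _ (Hy m))). specialize (Hn m).
      assert (0 < (/2)^m) by (apply pow_lt; lra).
      rewrite Rabs_pos_eq by lra. simpl.
      assert ((/2)^m * snorm X (fun i => Rabs (ys m i)) <= (/2)^m).
      { rewrite <- (Rmult_1_r ((/2)^m)) at 2. apply Rmult_le_compat_l; lra. }
      lra. }
  destruct (bss_complete X HX s Hs) as [Y [HY HYc]].
  { intros eps Heps. destruct (pow_lt_1_zero (/2) ltac:(rewrite Rabs_pos_eq; lra) (eps/2) ltac:(lra)) as [N HN].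
    exists N. intros p q Hp Hq.
    assert (H1 : forall n, (n >= N)%nat -> (/2)^n < eps/2).
    { intros n Hn'. specialize (HN n Hn'). rewrite Rabs_pos_eq in HN; auto. apply pow_le; lra. }
    destruct (Nat.le_ge_cases p q) as [Hpq|Hpq].
    - rewrite ssub_sym; auto. specialize (Hb _ _ Hpq). specialize (H1 p Hp).
      assert (0 <= (/2)^q) by (apply pow_le; lra). lra.
    - specialize (Hb _ _ Hpq). specialize (H1 q Hq).
      assert (0 <= (/2)^p) by (apply pow_le; lra). lra. }
  exists Y. split; auto. intros k i.
  pose proof (lim_coord X HX i s Y (Hu i) Hs HY HYc) as Hl.
  assert (Rbar_le ((/2)^k * Rabs (ys k i)) (Y i)).
  { apply is_lim_seq_le_loc with (fun _ => (/2)^k * Rabs (ys k i)) (fun p => s p i); auto.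
    2: apply is_lim_seq_const.
    exists (S k). intros n Hn0. unfold s. apply (fsum_ge_term n (fun k0 => (/2)^k0 * Rabs (ys k0 i))).
    intros. apply Rmult_le_pos. apply pow_le; lra. apply Rabs_pos. lia. }
  exact H.
Qed.

Lemma nat_unbounded x : exists n : nat, x < INR n.
Proof.
  destruct (archimed x) as [H1 _]. destruct (Z_lt_le_dec 0 (up x)) as [Hz|Hz].
  - exists (Z.to_nat (up x)). rewrite INR_IZR_INZ, Z2Nat.id by lia. auto.
  - exists 1%nat. simpl. apply IZR_le in Hz. lra.
Qed.

Lemma series_abs_scal c a : 0 <= c ->
  Series (fun n => Rabs (c * a n)) = c * Series (fun n => Rabs (a n)).
Proof. intros Hc. rewrite <- Series_scal_l. apply Series_ext; intros. rewrite Rabs_mult, Rabs_pos_eq; auto. Qed.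

Lemma ex_series_abs_scal c a : ex_series (fun n => Rabs (a n)) -> ex_series (fun n => Rabs (c * a n)).
Proof. intros H. apply (ex_series_ext (fun n => scal (Rabs c) (Rabs (a n)))). intros; unfold scal; simpl; unfold mult; simpl. rewrite Rabs_mult; auto.
  exact (@ex_series_scal_l R_AbsRing R_NormedModule (Rabs c) _ H). Qed.

Lemma kothe_mem_ex Y z x : smem (kothe Y) z -> smem Y x -> ex_series (fun n => Rabs (z n * x n)).
Proof. intros Hz Hx. apply (Hz x Hx). Qed.

Lemma kothe_norm Y (HY : BSS Y) (Hu : forall i, smem Y (unitv i)) z (Hz : smem (kothe Y) z) :
  0 <= snorm (kothe Y) z /\
  forall x, smem Y x -> Series (fun n => Rabs (z n * x n)) <= snorm (kothe Y) z * snorm Y x.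
Proof.
  assert (HB : exists B, forall x, smem Y x -> snorm Y x <= 1 -> Series (fun n => Rabs (z n * x n)) <= B).
  { apply NNPP. intros Hno.
    assert (Hk : forall k : nat, exists x, smem Y x /\ snorm Y x <= 1 /\
               INR k * 2^k < Series (fun n => Rabs (z n * x n))).
    { intros k. apply NNPP. intros Hk. apply Hno. exists (INR k * 2^k). intros x Hx Hn.
      apply Rnot_lt_le. intros Hlt. apply Hk. exists x; auto. }
    apply functional_choice in Hk. destruct Hk as [xs Hxs].
    destruct (hump Y HY Hu xs (fun k => proj1 (Hxs k)) (fun k => proj1 (proj2 (Hxs k)))) as [Yv [HYv HYb]].
    pose proof (kothe_mem_ex Y z Yv Hz HYv) as Hex.
    destruct (nat_unbounded (Series (fun n => Rabs (z n * Yv n)))) as [k Hk].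
    destruct (Hxs k) as [_ [_ Hgt]].
    assert (Hle : Series (fun n => Rabs ((/2)^k * (z n * xs k n))) <= Series (fun n => Rabs (z n * Yv n))).
    { apply Series_le; auto. intros n. split. apply Rabs_pos.
      rewrite !Rabs_mult. rewrite (Rabs_pos_eq ((/2)^k)) by (apply pow_le; lra).
      specialize (HYb k n). assert (0 <= (/2)^k * Rabs (xs k n)) by (apply Rmult_le_pos; [apply pow_le; lra|apply Rabs_pos]).
      assert (Rabs (Yv n) >= Yv n) by (apply Rle_ge, RRle_abs).
      replace ((/2)^k * (Rabs (z n) * Rabs (xs k n))) with (Rabs (z n) * ((/2)^k * Rabs (xs k n))) by ring.
      apply Rmult_le_compat_l. apply Rabs_pos. lra. }
    rewrite series_abs_scal in Hle by (apply pow_le; lra).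
    assert (Hp : (/2)^k * 2^k = 1). { rewrite <- Rpow_mult_distr. replace (/2*2) with 1 by field. apply pow1. }
    assert (0 < (/2)^k) by (apply pow_lt; lra).
    assert ((/2)^k * (INR k * 2^k) < (/2)^k * Series (fun n => Rabs (z n * xs k n))) by (apply Rmult_lt_compat_l; auto).
    replace ((/2)^k * (INR k * 2^k)) with (INR k * ((/2)^k * 2^k)) in H0 by ring. rewrite Hp in H0. lra. }
  destruct HB as [B HB].
  set (E := fun r => exists x, smem Y x /\ snorm Y x <= 1 /\ r = snorm l1 (smul z x)).
  assert (Hn : snorm (kothe Y) z = real (Lub_Rbar E)) by reflexivity.
  destruct (Lub_Rbar_correct E) as [Hub Hlub].
  assert (H0 : Rbar_le 0 (Lub_Rbar E)).
  { apply Hub. exists zero_seq. split. apply bss_zero; auto. rewrite norm_zero; auto. split. lra.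
    simpl. rewrite (Series_ext _ (fun _ => 0)). symmetry; apply series_zero. intros; unfold smul, zero_seq. rewrite Rmult_0_r, Rabs_R0; auto. }
  assert (H1 : Rbar_le (Lub_Rbar E) B).
  { apply Hlub. intros r [x [Hx [Hx1 ->]]]. apply HB; auto. }
  destruct (Lub_Rbar E) as [L| |] eqn:HL; simpl in H0, H1; try contradiction.
  rewrite Hn; simpl. split; auto.
  assert (HE : forall x, smem Y x -> snorm Y x <= 1 -> Series (fun n => Rabs (z n * x n)) <= L).
  { intros x Hx Hx1. assert (H : Rbar_le (Series (fun n => Rabs (z n * x n))) L).
    apply Hub. exists x; auto. exact H. }
  intros x Hx. destruct (bss_nn Y HY x Hx) as [Hpos|Hz0].
  - set (x' := sscal (/ snorm Y x) x).
    assert (Hx' : smem Y x') by (apply bss_scal; auto).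
    assert (Hnx' : snorm Y x' = 1). { unfold x'. rewrite bss_hom; auto. rewrite Rabs_pos_eq. field. lra. left; apply Rinv_0_lt_compat; auto. }
    specialize (HE x' Hx' ltac:(lra)). unfold x', sscal in HE.
    rewrite (Series_ext _ (fun n => Rabs (/ snorm Y x * (z n * x n)))) in HE.
    2: intros; f_equal; ring.
    rewrite series_abs_scal in HE. 2: left; apply Rinv_0_lt_compat; auto.
    apply Rmult_le_reg_l with (/ snorm Y x). apply Rinv_0_lt_compat; auto.
    replace (/ snorm Y x * (L * snorm Y x)) with L. auto. field. lra.
  - symmetry in Hz0. rewrite Hz0. pose proof (bss_def Y HY x Hx Hz0). subst x.
    rewrite (Series_ext _ (fun _ => 0)). rewrite (proj2 series_zero). lra. intros; unfold zero_seq. rewrite Rmult_0_r, Rabs_R0; auto.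
Qed.

Lemma geom_c c : ex_series (fun k => c * (/2)^k) /\ Series (fun k => c * (/2)^k) = 2 * c.
Proof.
  assert (Hg : is_series (fun k => (/2)^k) 2).
  { assert (H : is_series (fun k => (/2)^k) (/ (1 - /2))) by (apply is_series_geom; rewrite Rabs_pos_eq; lra).
    replace (/ (1 - /2)) with 2 in H by field. exact H. }
  assert (H2 : is_series (fun k => c * (/2)^k) (c * 2)) by (apply (@is_series_scal_l R_AbsRing R_NormedModule c _ 2); auto).
  split. exists (c * 2). auto. rewrite (is_series_unique _ _ H2). ring.
Qed.

Lemma series_unitv z i : Series (fun n => Rabs (z n * unitv i n)) = Rabs (z i).
Proof. rewrite (proj2 (series_single (fun n => Rabs (z n * unitv i n)) i ltac:(intros n Hn; unfold unitv; destruct (Nat.eqb_spec n i); [lia|]; rewrite Rmult_0_r, Rabs_R0; auto))).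
  unfold unitv; rewrite Nat.eqb_refl, Rmult_1_r; auto. Qed.

Lemma series_ge_term a k : (forall n, 0 <= a n) -> ex_series a -> a k <= Series a.
Proof. intros. eapply Rle_trans. apply (fsum_ge_term (S k) a k); auto. apply series_ge_fsum; auto. Qed.

Lemma F2 Y1 Y2 (HY1 : BSS Y1) (HY2 : BSS Y2) (Hu1 : forall i, smem Y1 (unitv i))
  (Hu2 : forall i, smem Y2 (unitv i)) g (Hg : smem (mult_space Y2 (kothe (kothe Y1))) g) :
  exists M, 0 < M /\ forall y z N, smem Y2 y -> smem (kothe Y1) z ->
    fsum N (fun i => Rabs (g i * y i * z i)) <= M * snorm Y2 y * snorm (kothe Y1) z.
Proof.
  apply NNPP; intros Hno.
  assert (Hk : forall k : nat, exists p : seq * seq * nat,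
    smem Y2 (fst (fst p)) /\ smem (kothe Y1) (snd (fst p)) /\
    (INR k + 1) * (2^k * 2^k) * snorm Y2 (fst (fst p)) * snorm (kothe Y1) (snd (fst p))
      < fsum (snd p) (fun i => Rabs (g i * fst (fst p) i * snd (fst p) i))).
  { intros k. apply NNPP; intros Hk. apply Hno. exists ((INR k + 1) * (2^k * 2^k)). split.
    apply Rmult_lt_0_compat. pose proof (pos_INR k); lra. apply Rmult_lt_0_compat; apply pow_lt; lra.
    intros y z N Hy Hz. apply Rnot_lt_le. intros Hlt. apply Hk. exists (y, z, N). simpl; auto. }
  apply functional_choice in Hk. destruct Hk as [P HP].
  set (ys := fun k => fst (fst (P k))). set (zs := fun k => snd (fst (P k))). set (Ns := fun k => snd (P k)).
  assert (Hys : forall k, smem Y2 (ys k)) by (intros k; apply (HP k)).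
  assert (Hzs : forall k, smem (kothe Y1) (zs k)) by (intros k; apply (HP k)).
  assert (Hgt : forall k, (INR k + 1) * (2^k * 2^k) * snorm Y2 (ys k) * snorm (kothe Y1) (zs k)
      < fsum (Ns k) (fun i => Rabs (g i * ys k i * zs k i))) by (intros k; apply (HP k)).
  clear HP Hno.
  set (ny := fun k => snorm Y2 (ys k)). set (nz := fun k => snorm (kothe Y1) (zs k)).
  assert (Hzb : forall k x, smem Y1 x -> Series (fun n => Rabs (zs k n * x n)) <= nz k * snorm Y1 x)
    by (intros; apply kothe_norm; auto).
  assert (Hfs0 : forall k, (forall i, zs k i = 0) \/ (forall i, ys k i = 0) -> False).
  { intros k Hc. specialize (Hgt k). rewrite fsum_zero in Hgt.
    assert (0 <= (INR k + 1) * (2^k * 2^k) * snorm Y2 (ys k) * snorm (kothe Y1) (zs k)).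
    { apply Rmult_le_pos. apply Rmult_le_pos. apply Rmult_le_pos. pose proof (pos_INR k); lra.
      apply Rmult_le_pos; apply pow_le; lra. apply bss_nn; auto. apply kothe_norm; auto. }
    lra. intros i _. destruct Hc as [Hc|Hc]; rewrite Hc; rewrite ?Rmult_0_r, ?Rmult_0_l; apply Rabs_R0. }
  assert (Hny : forall k, 0 < ny k).
  { intros k. destruct (bss_nn Y2 HY2 _ (Hys k)) as [|E0]; auto. exfalso. apply (Hfs0 k). right.
    intros i. symmetry in E0. pose proof (bss_def Y2 HY2 _ (Hys k) E0) as E1. rewrite E1. reflexivity. }
  assert (Hnz : forall k, 0 < nz k).
  { intros k. destruct (proj1 (kothe_norm Y1 HY1 Hu1 _ (Hzs k))) as [|E0]; auto. exfalso. apply (Hfs0 k). left.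
    intros i. specialize (Hzb k (unitv i) (Hu1 i)). rewrite series_unitv in Hzb. fold (nz k) in E0. rewrite <- E0 in Hzb.
    rewrite Rmult_0_l in Hzb. pose proof (Rabs_pos (zs k i)). apply Rabs_eq_0. lra. }
  set (ys' := fun k => sscal (/ ny k) (ys k)).
  assert (Hys' : forall k, smem Y2 (ys' k)) by (intros; apply bss_scal; auto).
  assert (Hnys' : forall k, snorm Y2 (ys' k) <= 1).
  { intros k. unfold ys'. rewrite bss_hom; auto. rewrite Rabs_pos_eq. fold (ny k). specialize (Hny k). right; field; lra.
    left; apply Rinv_0_lt_compat; auto. }
  destruct (hump Y2 HY2 Hu2 ys' Hys' Hnys') as [Yv [HYv HYb]].
  set (t := fun i k => (/2)^k * (Rabs (zs k i) / nz k)).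
  assert (Ht0 : forall i k, 0 <= t i k).
  { intros. unfold t. apply Rmult_le_pos. apply pow_le; lra. unfold Rdiv. apply Rmult_le_pos. apply Rabs_pos. left; apply Rinv_0_lt_compat; auto. }
  assert (Hte : forall i, ex_series (t i)).
  { intros i. apply (series_le_gen _ (fun k => snorm Y1 (unitv i) * (/2)^k)). 2: apply geom_c.
    intros k. split; auto. unfold t. rewrite Rmult_comm. apply Rmult_le_compat_r. apply pow_le; lra.
    specialize (Hzb k (unitv i) (Hu1 i)). rewrite series_unitv in Hzb. specialize (Hnz k).
    apply Rmult_le_reg_r with (nz k); auto. unfold Rdiv. rewrite Rmult_assoc, Rinv_l, Rmult_1_r by lra. lra. }
  set (Zv := fun i => Series (t i)).
  assert (HZ0 : forall i, 0 <= Zv i).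
  { intros i. eapply Rle_trans. 2: apply (series_ge_term _ 0%nat); auto. auto. }
  assert (HZv : smem (kothe Y1) Zv).
  { intros x Hx. simpl. unfold smul.
    apply (ex_series_bounded _ (2 * snorm Y1 x)). intros; apply Rabs_pos.
    intros N. rewrite (fsum_ext N _ (fun i => Series (fun k => t i k * Rabs (x i)))).
    2:{ intros i _. rewrite Rabs_mult, (Rabs_pos_eq (Zv i)) by auto. unfold Zv. rewrite <- Series_scal_r. reflexivity. }
    assert (Hex : forall i, ex_series (fun k => t i k * Rabs (x i))).
    { intros i. apply (ex_series_ext (fun k => scal (Rabs (x i)) (t i k))). intros; unfold scal; simpl; unfold mult; simpl; ring.
      exact (@ex_series_scal_l R_AbsRing R_NormedModule (Rabs (x i)) _ (Hte i)). }
    destruct (fsum_series N (fun i k => t i k * Rabs (x i)) Hex) as [E1 E2]. rewrite <- E2.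
    rewrite <- (proj2 (geom_c (snorm Y1 x))).
    apply Series_le. 2: apply geom_c. intros k. split. apply fsum_nonneg. intros; apply Rmult_le_pos; auto; apply Rabs_pos.
    rewrite (fsum_ext N _ (fun i => ((/2)^k / nz k) * Rabs (zs k i * x i))).
    2:{ intros i _. unfold t. rewrite Rabs_mult. unfold Rdiv. ring. }
    rewrite fsum_scal. specialize (Hnz k).
    eapply Rle_trans. apply Rmult_le_compat_l. unfold Rdiv; apply Rmult_le_pos. apply pow_le; lra. left; apply Rinv_0_lt_compat; auto.
    eapply Rle_trans. apply series_ge_fsum. intros; apply Rabs_pos. apply (Hzs k x Hx). apply Hzb; auto.
    right. field. lra. }
  pose proof (Hg Yv HYv Zv HZv) as Hex. simpl in Hex. unfold smul in Hex.
  destruct (nat_unbounded (Series (fun n => Rabs (g n * Yv n * Zv n)))) as [k Hk].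
  assert (Hge : fsum (Ns k) (fun i => Rabs (g i * Yv i * Zv i)) <= Series (fun n => Rabs (g n * Yv n * Zv n)))
    by (apply series_ge_fsum; auto; intros; apply Rabs_pos).
  assert (Hcmp : fsum (Ns k) (fun i => ((/2)^k * (/2)^k / (ny k * nz k)) * Rabs (g i * ys k i * zs k i))
       <= fsum (Ns k) (fun i => Rabs (g i * Yv i * Zv i))).
  { apply fsum_le. intros i _. rewrite !Rabs_mult.
    assert (HY : (/2)^k * (Rabs (ys k i) / ny k) <= Rabs (Yv i)).
    { eapply Rle_trans. 2: apply RRle_abs. eapply Rle_trans. 2: apply (HYb k i). unfold ys', sscal.
      rewrite Rabs_mult, (Rabs_pos_eq (/ ny k)). right; unfold Rdiv; ring. left; apply Rinv_0_lt_compat; auto. }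
    assert (HZ : t i k <= Rabs (Zv i)).
    { rewrite Rabs_pos_eq by auto. apply series_ge_term; auto. }
    unfold t in HZ.
    replace ((/2)^k * (/2)^k / (ny k * nz k) * (Rabs (g i) * Rabs (ys k i) * Rabs (zs k i)))
      with (Rabs (g i) * ((/2)^k * (Rabs (ys k i) / ny k)) * ((/2)^k * (Rabs (zs k i) / nz k))).
    2:{ unfold Rdiv. rewrite Rinv_mult. ring. }
    apply Rmult_le_compat. apply Rmult_le_pos. apply Rabs_pos. apply Rmult_le_pos. apply pow_le; lra.
    unfold Rdiv; apply Rmult_le_pos. apply Rabs_pos. left; apply Rinv_0_lt_compat; auto.
    apply (Ht0 i k). apply Rmult_le_compat_l. apply Rabs_pos. auto. auto. }
  rewrite fsum_scal in Hcmp.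
  specialize (Hgt k). fold (ny k) (nz k) in Hgt.
  assert (Hc0 : 0 < (/2)^k * (/2)^k / (ny k * nz k)).
  { unfold Rdiv. apply Rmult_lt_0_compat. apply Rmult_lt_0_compat; apply pow_lt; lra.
    apply Rinv_0_lt_compat. apply Rmult_lt_0_compat; auto. }
  assert (Hm := Rmult_lt_compat_l _ _ _ Hc0 Hgt).
  replace ((/2)^k * (/2)^k / (ny k * nz k) * ((INR k + 1) * (2^k * 2^k) * ny k * nz k)) with
    ((INR k + 1) * (((/2)^k * 2^k) * ((/2)^k * 2^k))) in Hm.
  2:{ specialize (Hny k); specialize (Hnz k). field. lra. }
  replace ((/2)^k * 2^k) with 1 in Hm. 2:{ rewrite <- Rpow_mult_distr. replace (/2*2) with 1 by field. rewrite pow1; auto. }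
  lra.
Qed.

Lemma pi_le_rep X Y v f w : pi_rep X Y v f w ->
  Rbar_le (pi_norm X Y v) (Series (fun n => snorm X (f n) * snorm Y (w n))).
Proof. intros H. destruct (Glb_Rbar_correct (fun c => exists f g, pi_rep X Y v f g /\
              c = Series (fun n => snorm X (f n) * snorm Y (g n)))) as [Hlb _].
  apply Hlb. exists f, w. auto. Qed.

Lemma Rbar_C C L P V : 0 < C -> Rbar_le (Finite L) (Rbar_mult (Finite C) P) -> Rbar_le P (Finite V) -> L <= C * V.
Proof. intros HC H1 H2. destruct P as [p| |]; simpl in *.
  - apply Rle_trans with (C * p); auto. apply Rmult_le_compat_l; lra.
  - contradiction.
  - exfalso. revert H1. unfold Rbar_mult, Rbar_mult'. destruct (Rle_dec 0 C); [|lra].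
    destruct (Rle_lt_or_eq_dec 0 C r); simpl; auto. lra.
Qed.

Lemma opcoord X Y (HX : BSS X) (HY : BSS Y) (HuX : forall i, smem X (unitv i)) (HuY : forall i, smem Y (unitv i))
  (bX : schauder_basis X unitv) T (HT : bounded_linear X Y T) x (Hx : smem X x) :
  forall i, is_lim_seq (fun K => fsum K (fun k => x k * T (unitv k) i)) (T x i).
Proof.
  destruct HT as [Tm [Ta [Ts [Kt HKt]]]].
  destruct bX as [_ bX]. destruct (bX x Hx) as [al [Hal _]].
  set (s := fun K => fsum_seq K al unitv).
  assert (sS : forall K, s (S K) = sadd (s K) (sscal (al K) (unitv K))) by reflexivity.
  assert (Hs : forall K, smem X (s K)).
  { induction K. apply bss_zero; auto. rewrite sS. apply bss_add; auto. apply bss_scal; auto. }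
  assert (Hc : forall eps, 0 < eps -> exists N, forall p, (N <= p)%nat -> snorm X (ssub (s p) x) < eps).
  { intros eps He. destruct (Hal eps He) as [N HN]. exists N. intros p Hp. rewrite (ssub_sym X HX (s p) x (Hs p) Hx). apply HN; auto. }
  assert (Hal_x : forall i, al i = x i).
  { intros i. pose proof (lim_coord X HX i s x (HuX i) Hs Hx Hc) as L1.
    assert (L2 : is_lim_seq (fun p => s p i) (al i)).
    { apply is_lim_seq_ext_loc with (fun _ => al i). exists (S i). intros n Hn. unfold s, fsum_seq.
      rewrite fsum_unitv. destruct (Nat.ltb_spec i n); [auto|lia]. apply is_lim_seq_const. }
    apply is_lim_seq_unique in L1. apply is_lim_seq_unique in L2. rewrite L1 in L2. injection L2; auto. }
  assert (T0 : T zero_seq = zero_seq).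
  { replace zero_seq with (sscal 0 zero_seq) at 1. rewrite Ts. apply functional_extensionality; intros; unfold sscal, zero_seq; lra.
    apply bss_zero; auto. apply functional_extensionality; intros; unfold sscal, zero_seq; lra. }
  assert (Tsub : forall u v, smem X u -> smem X v -> T (ssub u v) = ssub (T u) (T v)).
  { intros u v Hu Hv. rewrite !ssub_eq. rewrite Ta, Ts; auto. apply bss_scal; auto. }
  assert (Tsum : forall K, T (s K) = fsum_seq K al (fun k => T (unitv k))).
  { induction K. exact T0. rewrite sS, Ta, Ts, IHK; auto. apply bss_scal; auto. }
  intros i.
  assert (HT' : is_lim_seq (fun p => T (s p) i) (T x i)).
  { apply (lim_coord Y HY i (fun p => T (s p)) (T x) (HuY i)); auto.
    intros eps He. destruct (Hc (eps / (Rabs Kt + 1))) as [N HN].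
    apply Rdiv_lt_0_compat; auto. pose proof (Rabs_pos Kt); lra.
    exists N. intros p Hp. rewrite <- Tsub; auto. eapply Rle_lt_trans. apply HKt. apply ssub_mem; auto.
    specialize (HN p Hp). pose proof (bss_nn X HX (ssub (s p) x) (ssub_mem X HX _ _ (Hs p) Hx)).
    apply Rle_lt_trans with ((Rabs Kt + 1) * snorm X (ssub (s p) x)).
    apply Rmult_le_compat_r; auto. pose proof (RRle_abs Kt); lra.
    pose proof (Rabs_pos Kt). apply Rmult_lt_reg_l with (/ (Rabs Kt + 1)). apply Rinv_0_lt_compat; lra.
    rewrite <- Rmult_assoc, Rinv_l, Rmult_1_l by lra. rewrite Rmult_comm. exact HN. }
  eapply is_lim_seq_ext; [|exact HT']. intros p. cbv beta. rewrite Tsum. unfold fsum_seq. apply fsum_ext. intros; rewrite Hal_x; auto.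
Qed.

Lemma small_div p q : Rabs (p / (1 + Rabs p + Rabs q)) <= 1.
Proof. pose proof (Rabs_pos p); pose proof (Rabs_pos q).
  unfold Rdiv. rewrite Rabs_mult, Rabs_inv, (Rabs_pos_eq (1 + Rabs p + Rabs q)) by lra.
  apply Rmult_le_reg_r with (1 + Rabs p + Rabs q). lra. rewrite Rmult_assoc, Rinv_l by lra. lra. Qed.

Lemma small_div2 p q : Rabs (p / (1 + Rabs q + Rabs p)) <= 1.
Proof. replace (1 + Rabs q + Rabs p) with (1 + Rabs p + Rabs q) by ring. apply small_div. Qed.

Lemma row_prop (a c : nat -> R) :
  (forall m r, (forall j, Rabs (r j) <= 1) -> fsum m (fun j => r j * c j) = 0 -> fsum m (fun j => r j * a j) <= 0) ->
  exists g, (forall j, a j = g * c j) /\ (g <> 0 -> exists j, c j <> 0).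
Proof.
  intros H.
  assert (Hsing : forall j u, Rabs u <= 1 -> u * c j = 0 -> u * a j <= 0).
  { intros j u Hu Hc. specialize (H (S j) (fun k => if Nat.eqb k j then u else 0)).
    cbv beta in H. rewrite !fsum_single in H by lia. apply H; auto. intros k; destruct (Nat.eqb k j); auto. rewrite Rabs_R0; lra. }
  assert (Hpair : forall j j0 u v, j <> j0 -> Rabs u <= 1 -> Rabs v <= 1 -> u * c j0 + v * c j = 0 -> u * a j0 + v * a j <= 0).
  { intros j j0 u v Hne Hu Hv Hc.
    specialize (H (S (Nat.max j j0)) (fun k => (if Nat.eqb k j0 then u else 0) + (if Nat.eqb k j then v else 0))). cbv beta in H.
    rewrite (fsum_ext _ (fun j1 => _ * a j1) (fun k => (if Nat.eqb k j0 then u else 0) * a k + (if Nat.eqb k j then v else 0) * a k)) in H by (intros; ring).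
    rewrite (fsum_ext _ (fun j1 => _ * c j1) (fun k => (if Nat.eqb k j0 then u else 0) * c k + (if Nat.eqb k j then v else 0) * c k)) in H by (intros; ring).
    rewrite !fsum_plus, !fsum_single in H by lia. apply H; auto.
    intros k. destruct (Nat.eqb_spec k j0); destruct (Nat.eqb_spec k j); try lia; rewrite ?Rplus_0_r, ?Rplus_0_l; auto; rewrite Rabs_R0; lra. }
  destruct (classic (exists j0, c j0 <> 0)) as [[j0 Hj0]|Hno].
  - exists (a j0 / c j0). split. 2: intros _; exists j0; auto.
    intros j. destruct (Nat.eq_dec j j0) as [->|Hne]. field; auto.
    set (t := 1 + Rabs (c j) + Rabs (c j0)).
    assert (Ht : 0 < t) by (unfold t; pose proof (Rabs_pos (c j)); pose proof (Rabs_pos (c j0)); lra).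
    assert (H1 := Hpair j j0 (c j / t) (- (c j0 / t)) Hne (small_div _ _) ltac:(rewrite Rabs_Ropp; apply small_div2) ltac:(field; lra)).
    assert (H2 := Hpair j j0 (- (c j / t)) (c j0 / t) Hne ltac:(rewrite Rabs_Ropp; apply small_div) ltac:(apply small_div2) ltac:(field; lra)).
    assert (E : c j / t * a j0 + - (c j0 / t) * a j = 0) by lra.
    assert (E2 : c j * a j0 = c j0 * a j).
    { apply Rmult_eq_reg_r with (/ t). 2: apply Rinv_neq_0_compat; lra. unfold Rdiv in E. lra. }
    apply Rmult_eq_reg_l with (c j0); auto. rewrite <- E2. field; auto.
  - exists 0. split. 2: intros; lra.
    intros j. assert (Hc : c j = 0) by (apply NNPP; intros Hc; apply Hno; exists j; auto).
    assert (H1 := Hsing j 1 ltac:(rewrite Rabs_R1; lra) ltac:(rewrite Hc; ring)).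
    assert (H2 := Hsing j (-1) ltac:(rewrite Rabs_left; lra) ltac:(rewrite Hc; ring)).
    lra.
Qed.

Lemma abs_series_ge u N : Rbar_le (fsum N (fun n => Rabs (u n))) (abs_series u).
Proof. unfold abs_series. destruct (Lub_Rbar_correct (fun s => exists N, s = fsum N (fun n => Rabs (u n)))) as [Hub _].
  apply Hub. exists N; auto. Qed.

Lemma kothe_zero Y : smem (kothe Y) zero_seq.
Proof. intros x _. simpl. apply (ex_series_ext (fun _ => 0)). intros; unfold smul, zero_seq. rewrite Rmult_0_l, Rabs_R0; auto.
  apply series_zero. Qed.

Lemma fsum_one_row i (F : nat -> R) : (forall i', i' <> i -> F i' = 0) -> fsum (S i) F = F i.
Proof. intros H. simpl. rewrite fsum_zero. ring. intros; apply H; lia. Qed.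

Lemma pi_norm_zero_le Y2 Y1 (HY2 : BSS Y2) : Rbar_le (pi_norm Y2 (kothe Y1) zero_seq) (Finite 0).
Proof.
  eapply Rbar_le_trans. apply (pi_le_rep _ _ _ (fun _ => zero_seq) (fun _ => zero_seq)).
  - split. intros; apply bss_zero; auto. split. intros; apply kothe_zero. split.
    apply (ex_series_ext (fun _ => 0)). intros. rewrite (norm_zero Y2 HY2), Rmult_0_l. reflexivity. apply series_zero.
    intros i. eapply Rbar_le_trans. 2: apply (abs_series_ge _ 0). simpl. unfold zero_seq; rewrite Rabs_R0; lra.
  - simpl. rewrite (Series_ext _ (fun _ => 0)). rewrite (proj2 series_zero); lra. intros; rewrite (norm_zero Y2 HY2); ring.
Qed.

Definition condc (Y2 Y1 : sspace) (a b : nat -> nat -> R) (h : seq) (C : R) :=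
  forall (n m : nat) (r : nat -> nat -> R),
        (forall i j, Rabs (r i j) <= 1) ->
        Rbar_le (Finite (fsum n (fun i => fsum m (fun j => r i j * a i j))))
          (Rbar_mult (Finite C)
             (pi_norm Y2 (kothe Y1)
                (fsum_seq n (fun i => fsum m (fun j => h j * r i j * b i j)) unitv))).

Lemma c_rows Y2 Y1 (HY2 : BSS Y2) a b h C (HC : 0 < C) (Hc : condc Y2 Y1 a b h C) :
  exists g, forall i, (forall j, a i j = g i * (h j * b i j)) /\ (g i <> 0 -> exists j, h j * b i j <> 0).
Proof.
  assert (Hrow : forall i, exists gi, (forall j, a i j = gi * (h j * b i j)) /\ (gi <> 0 -> exists j, h j * b i j <> 0)).
  2:{ destruct (functional_choice _ Hrow) as [g Hg]. exists g; auto. }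
  intros i. apply row_prop.
  intros m r Hr Hz.
  specialize (Hc (S i) m (fun i' j => if Nat.eqb i' i then r j else 0)). cbv beta in Hc.
  rewrite fsum_one_row in Hc. rewrite Nat.eqb_refl in Hc.
  2:{ intros i' Hi'. apply fsum_zero. intros. destruct (Nat.eqb_spec i' i); [lia|ring]. }
  replace (fsum_seq (S i) (fun i0 => fsum m (fun j => h j * (if Nat.eqb i0 i then r j else 0) * b i0 j)) unitv) with zero_seq in Hc.
  - apply (Rbar_C C _ _ 0 HC) in Hc. lra. intros; destruct (Nat.eqb_spec i0 i); [apply Hr|rewrite Rabs_R0; lra].
    apply pi_norm_zero_le; auto.
  - apply functional_extensionality. intros k. unfold fsum_seq, zero_seq. symmetry. apply fsum_zero. intros i' _.
    destruct (Nat.eqb_spec i' i). subst. rewrite (fsum_ext _ _ (fun j => r j * (h j * b i j))). rewrite Hz. ring.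
    intros; ring. rewrite fsum_zero. ring. intros; ring.
Qed.

Lemma bound_exists N (J : nat -> nat) : exists m, forall i, (i < N)%nat -> (J i < m)%nat.
Proof. induction N. exists 0%nat; intros; lia. destruct IHN as [m Hm]. exists (S (Nat.max m (J N))).
  intros i Hi. destruct (Nat.eq_dec i N). subst; lia. specialize (Hm i ltac:(lia)). lia. Qed.

Lemma c_mem Y2 Y1 (HY2 : BSS Y2) a b h C (HC : 0 < C) (Hc : condc Y2 Y1 a b h C) g
  (Hg : forall i, (forall j, a i j = g i * (h j * b i j)) /\ (g i <> 0 -> exists j, h j * b i j <> 0)) :
  smem (mult_space Y2 (kothe (kothe Y1))) g.
Proof.
  intros y Hy z Hz. simpl. unfold smul.
  assert (HJ : forall i, exists j, g i <> 0 -> h j * b i j <> 0).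
  { intros i. destruct (classic (g i = 0)). exists 0%nat; intros; contradiction. apply Hg in H. destruct H as [j Hj]; exists j; auto. }
  destruct (functional_choice _ HJ) as [J HJ']. clear HJ.
  apply (ex_series_bounded _ (C * snorm Y2 y * snorm (kothe Y1) z)). intros; apply Rabs_pos.
  intros N. destruct (bound_exists N J) as [m Hm].
  set (cc := fun i => h (J i) * b i (J i)).
  set (w := fun i => Rabs (g i * y i * z i)).
  set (q := fun i => if Req_EM_T (g i) 0 then 0 else w i / (g i * cc i)).
  set (t := 1 + fsum N (fun i => Rabs (q i))).
  assert (Ht : 0 < t). { unfold t. pose proof (fsum_nonneg N (fun i => Rabs (q i)) (fun i => Rabs_pos _)). lra. }
  set (r := fun i j => if Nat.ltb i N then (if Nat.eqb j (J i) then q i / t else 0) else 0).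
  assert (Hr : forall i j, Rabs (r i j) <= 1).
  { intros i j. unfold r. destruct (Nat.ltb_spec i N); [|rewrite Rabs_R0; lra].
    destruct (Nat.eqb j (J i)); [|rewrite Rabs_R0; lra].
    unfold Rdiv. rewrite Rabs_mult, Rabs_inv, (Rabs_pos_eq t) by lra.
    apply Rmult_le_reg_r with t; auto. rewrite Rmult_assoc, Rinv_l, Rmult_1_r, Rmult_1_l by lra.
    pose proof (fsum_ge_term N (fun i => Rabs (q i)) i (fun i => Rabs_pos _) H). unfold t; lra. }
  assert (Hqc : forall i, q i * cc i * g i = w i).
  { intros i. unfold q. destruct (Req_EM_T (g i) 0) as [E0|E0].
    - unfold w. rewrite E0. rewrite !Rmult_0_l, Rabs_R0. ring.
    - specialize (HJ' i E0). fold (cc i) in HJ'. field; auto. }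
  assert (Hqc2 : forall i, Rabs (q i * cc i) <= Rabs (y i * z i)).
  { intros i. unfold q. destruct (Req_EM_T (g i) 0) as [E0|E0].
    - rewrite Rmult_0_l, Rabs_R0. apply Rabs_pos.
    - specialize (HJ' i E0). fold (cc i) in HJ'. replace (w i / (g i * cc i) * cc i) with (w i / g i) by (field; auto).
      unfold w. unfold Rdiv. rewrite Rabs_mult, Rabs_inv, Rabs_Rabsolu, !Rabs_mult.
      right. field. intros Ha; apply E0; apply Rabs_eq_0; auto. }
  specialize (Hc N m r Hr).
  rewrite (fsum_ext N _ (fun i => w i * / t)) in Hc.
  2:{ intros i Hi. unfold r. rewrite (fsum_ext m _ (fun j => (if Nat.eqb j (J i) then q i / t else 0) * a i j)).
      2:{ intros j _. destruct (Nat.ltb_spec i N); [auto|lia]. }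
      rewrite fsum_single by auto. rewrite (proj1 (Hg i)). rewrite <- (Hqc i). unfold cc. field. lra. }
  rewrite (fsum_ext N _ (fun i => / t * w i)) in Hc by (intros; ring). rewrite fsum_scal in Hc.
  set (f := fun n : nat => if Nat.eqb n 0 then sscal (/ t) y else zero_seq).
  set (ww := fun n : nat => if Nat.eqb n 0 then z else zero_seq).
  set (V := fsum_seq N (fun i => fsum m (fun j => h j * r i j * b i j)) unitv) in Hc.
  assert (Hser : forall n, n <> 0%nat -> snorm Y2 (f n) * snorm (kothe Y1) (ww n) = 0).
  { intros n Hn. unfold f. destruct (Nat.eqb_spec n 0); [lia|]. rewrite norm_zero; auto; ring. }
  destruct (series_single _ 0 Hser) as [Hex Hs0].
  assert (Hrep : pi_rep Y2 (kothe Y1) V f ww).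
  { split. intros n; unfold f; destruct (Nat.eqb n 0). apply bss_scal; auto. apply bss_zero; auto.
    split. intros n; unfold ww; destruct (Nat.eqb n 0). auto. apply kothe_zero.
    split. auto.
    intros k. eapply Rbar_le_trans. 2: apply (abs_series_ge _ 1). simpl.
    unfold V, fsum_seq. rewrite fsum_unitv. destruct (Nat.ltb_spec k N).
    - rewrite (fsum_ext m _ (fun j => (if Nat.eqb j (J k) then q k / t else 0) * (h j * b k j))).
      2:{ intros j _. unfold r. destruct (Nat.ltb_spec k N); [|lia]. ring. }
      rewrite fsum_single by auto. unfold f, ww, sscal. simpl. fold (cc k).
      replace (q k / t * cc k) with (/ t * (q k * cc k)) by (field; lra).
      replace (/ t * y k * z k) with (/ t * (y k * z k)) by ring.
      rewrite (Rabs_mult (/t) (q k * cc k)), (Rabs_mult (/t) (y k * z k)), (Rabs_pos_eq (/ t)) by (left; apply Rinv_0_lt_compat; auto).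
      rewrite Rplus_0_l. apply Rmult_le_compat_l. left; apply Rinv_0_lt_compat; auto. apply Hqc2.
    - rewrite Rabs_R0. simpl. rewrite Rplus_0_l. apply Rabs_pos. }
  pose proof (Rbar_C _ _ _ _ HC Hc (pi_le_rep _ _ _ _ _ Hrep)) as Hfin.
  rewrite Hs0 in Hfin. unfold f, ww in Hfin. simpl in Hfin. rewrite bss_hom in Hfin by auto.
  rewrite Rabs_pos_eq in Hfin by (left; apply Rinv_0_lt_compat; auto).
  apply Rmult_le_reg_l with (/ t). apply Rinv_0_lt_compat; auto.
  replace (/ t * (C * snorm Y2 y * snorm (kothe Y1) z)) with (C * (/ t * snorm Y2 y * snorm (kothe Y1) z)) by ring.
  exact Hfin.
Qed.

Lemma le_eps x y A : 0 <= A -> (forall d, 0 < d -> x <= y + d * A) -> x <= y.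
Proof. intros HA H. apply Rnot_lt_le. intros Hlt. specialize (H ((x - y) / (A + 1)) ltac:(apply Rdiv_lt_0_compat; lra)).
  assert (E : (x - y) / (A + 1) * A = (x - y) - (x - y) / (A + 1)) by (field; lra).
  assert (0 < (x - y) / (A + 1)) by (apply Rdiv_lt_0_compat; lra). lra. Qed.

Lemma E1 Y2 Y1 (HY1 : BSS Y1) (HY2 : BSS Y2) (Hu1 : forall i, smem Y1 (unitv i)) g M (HM0 : 0 < M)
  (HM : forall y z N, smem Y2 y -> smem (kothe Y1) z ->
    fsum N (fun i => Rabs (g i * y i * z i)) <= M * snorm Y2 y * snorm (kothe Y1) z)
  V f w (Hrep : pi_rep Y2 (kothe Y1) V f w) n :
  fsum n (fun i => Rabs (g i * V i)) <= M * Series (fun k => snorm Y2 (f k) * snorm (kothe Y1) (w k)).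
Proof.
  destruct Hrep as [Hf [Hw [Hex Hle]]].
  assert (Hnn : forall k, 0 <= snorm Y2 (f k) * snorm (kothe Y1) (w k)).
  { intros k. apply Rmult_le_pos. apply bss_nn; auto. apply kothe_norm; auto. }
  assert (Hone : forall d, 0 < d -> forall i, exists K, Rabs (V i) - d <= fsum K (fun k => Rabs (f k i * w k i))).
  { intros d Hd i. apply NNPP. intros Hno.
    assert (Hub : Rbar_le (abs_series (fun k => f k i * w k i)) (Rabs (V i) - d)).
    { unfold abs_series. destruct (Lub_Rbar_correct (fun s => exists N, s = fsum N (fun k => Rabs (f k i * w k i)))) as [_ Hl].
      apply Hl. intros s [N ->]. simpl. apply Rnot_lt_le. intros Hlt. apply Hno. exists N. lra. }
    pose proof (Rbar_le_trans _ _ _ (Hle i) Hub). simpl in H. lra. }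
  assert (Hall : forall d, 0 < d -> forall n, exists K, forall i, (i < n)%nat -> Rabs (V i) - d <= fsum K (fun k => Rabs (f k i * w k i))).
  { intros d Hd n0. induction n0. exists 0%nat; intros; lia.
    destruct IHn0 as [K1 HK1]. destruct (Hone d Hd n0) as [K2 HK2]. exists (Nat.max K1 K2).
    intros i Hi. destruct (Nat.eq_dec i n0).
    - subst. eapply Rle_trans. apply HK2. apply fsum_mono. intros; apply Rabs_pos. lia.
    - eapply Rle_trans. apply HK1. lia. apply fsum_mono. intros; apply Rabs_pos. lia. }
  apply le_eps with (fsum n (fun i => Rabs (g i))). apply fsum_nonneg; intros; apply Rabs_pos.
  intros d Hd. destruct (Hall d Hd n) as [K HK].
  assert (Esplit : fsum n (fun i => Rabs (g i * V i)) = fsum n (fun i => Rabs (g i) * (Rabs (V i) - d)) + d * fsum n (fun i => Rabs (g i))).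
  { rewrite <- fsum_scal, <- fsum_plus. apply fsum_ext. intros; rewrite Rabs_mult; ring. }
  rewrite Esplit. apply Rplus_le_compat_r.
  eapply Rle_trans. apply (fsum_le n _ (fun i => fsum K (fun k => Rabs (g i * f k i * w k i)))).
  { intros i Hi. rewrite (fsum_ext K _ (fun k => Rabs (g i) * Rabs (f k i * w k i))) by (intros; rewrite <- Rabs_mult; f_equal; ring).
    rewrite fsum_scal. apply Rmult_le_compat_l. apply Rabs_pos. apply HK; auto. }
  rewrite fsum_swap. eapply Rle_trans. apply (fsum_le K _ (fun k => M * (snorm Y2 (f k) * snorm (kothe Y1) (w k)))).
  { intros k _. rewrite <- Rmult_assoc. apply HM; auto. }
  rewrite fsum_scal. apply Rmult_le_compat_l.
  lra. apply series_ge_fsum; auto.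
Qed.

Lemma b_to_c Y2 Y1 (HY1 : BSS Y1) (HY2 : BSS Y2) (Hu1 : forall i, smem Y1 (unitv i))
  (Hu2 : forall i, smem Y2 (unitv i)) a b h g (Hg : smem (mult_space Y2 (kothe (kothe Y1))) g)
  (Hmat : forall i j, a i j = g i * (h j * b i j)) : exists C, 0 < C /\ condc Y2 Y1 a b h C.
Proof.
  destruct (F2 Y1 Y2 HY1 HY2 Hu1 Hu2 g Hg) as [M [HM0 HM]].
  exists M. split; auto. intros n m r Hr.
  set (V := fsum_seq n (fun i => fsum m (fun j => h j * r i j * b i j)) unitv).
  assert (HL : fsum n (fun i => fsum m (fun j => r i j * a i j)) <= fsum n (fun i => Rabs (g i * V i))).
  { apply fsum_le. intros i Hi. unfold V, fsum_seq. rewrite fsum_unitv. destruct (Nat.ltb_spec i n); [|lia].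
    eapply Rle_trans. 2: apply RRle_abs. rewrite <- fsum_scal. right. apply fsum_ext. intros; rewrite Hmat; ring. }
  set (L := fsum n (fun i => fsum m (fun j => r i j * a i j))) in *.
  unfold pi_norm. fold V.
  set (E := fun c => exists f g0, pi_rep Y2 (kothe Y1) V f g0 /\ c = Series (fun n0 => snorm Y2 (f n0) * snorm (kothe Y1) (g0 n0))).
  destruct (Glb_Rbar_correct E) as [_ Hglb].
  assert (HLM : Rbar_le (L / M) (Glb_Rbar E)).
  { apply Hglb. intros x [f [w [Hrep ->]]]. simpl.
    apply Rmult_le_reg_l with M; auto. replace (M * (L / M)) with L by (field; lra).
    eapply Rle_trans. apply HL. apply (E1 Y2 Y1 HY1 HY2 Hu1 g M HM0 HM V f w Hrep). }
  destruct (Glb_Rbar E) as [p| |]; simpl in HLM |- *.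
  - apply Rmult_le_reg_l with (/ M). apply Rinv_0_lt_compat; auto.
    replace (/ M * (M * p)) with p by (field; lra). rewrite Rmult_comm. exact HLM.
  - unfold Rbar_mult, Rbar_mult'. destruct (Rle_dec 0 M); [|lra]. destruct (Rle_lt_or_eq_dec 0 M r0); simpl; auto. lra.
  - contradiction.
Qed.

Lemma mat_of_a X2 Y2 S h g (HX2 : BSS X2) (HS : bounded_linear X2 Y2 S) (Hu2 : forall j, smem X2 (unitv j))
  X1 (Hu1 : forall j, smem X1 (unitv j)) T (HT : forall x, smem X1 x -> T x = smul g (S (smul h x))) :
  forall i j, op_matrix T i j = g i * (h j * op_matrix S i j).
Proof.
  intros i j. unfold op_matrix. rewrite HT by auto.
  replace (smul h (unitv j)) with (sscal (h j) (unitv j)).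
  destruct HS as [_ [_ [Hs _]]]. rewrite Hs by auto. reflexivity.
  apply functional_extensionality; intros k. unfold smul, sscal, unitv. destruct (Nat.eqb_spec k j); subst; ring.
Qed.

Lemma a_of_mat X1 X2 Y1 Y2 T S h g (HX1 : BSS X1) (HX2 : BSS X2) (HY1 : BSS Y1) (HY2 : BSS Y2)
  (bX1 : schauder_basis X1 unitv) (bX2 : schauder_basis X2 unitv)
  (Hu1 : forall i, smem Y1 (unitv i)) (Hu2 : forall i, smem Y2 (unitv i))
  (HT : bounded_linear X1 Y1 T) (HS : bounded_linear X2 Y2 S) (hh : smem (mult_space X1 X2) h)
  (Hmat : forall i j, op_matrix T i j = g i * (h j * op_matrix S i j)) :
  forall x, smem X1 x -> T x = smul g (S (smul h x)).
Proof.
  intros x Hx. apply functional_extensionality. intros i.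
  pose proof (opcoord X1 Y1 HX1 HY1 (proj1 bX1) Hu1 bX1 T HT x Hx i) as L1.
  pose proof (opcoord X2 Y2 HX2 HY2 (proj1 bX2) Hu2 bX2 S HS (smul h x) (hh x Hx) i) as L2.
  apply (is_lim_seq_scal_l _ (g i)) in L2.
  assert (L1' : is_lim_seq (fun K => g i * fsum K (fun k => smul h x k * S (unitv k) i)) (T x i)).
  { eapply is_lim_seq_ext; [|exact L1]. intros K. cbv beta. rewrite <- fsum_scal. apply fsum_ext. intros k _. unfold smul.
    change (T (unitv k) i) with (op_matrix T i k). change (S (unitv k) i) with (op_matrix S i k). rewrite Hmat. ring. }
  clear L1. rename L1' into L1.
  apply is_lim_seq_unique in L1. apply is_lim_seq_unique in L2. rewrite L1 in L2. simpl in L2. injection L2. unfold smul. auto.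
Qed.

Lemma d_rows a b h C (HC : 0 < C)
  (Hd : forall (n m : nat) (r : nat -> R), (forall j, Rabs (r j) <= 1) ->
        fsum m (fun j => r j * a n j) <= C * Rabs (fsum m (fun j => h j * r j * b n j))) :
  exists g, forall n, (forall j, a n j = g n * (h j * b n j)) /\ Rabs (g n) <= C.
Proof.
  assert (Hrow : forall n, exists gn, (forall j, a n j = gn * (h j * b n j)) /\ Rabs gn <= C).
  2:{ destruct (functional_choice _ Hrow) as [g Hg]. exists g; auto. }
  intros n. destruct (row_prop (a n) (fun j => h j * b n j)) as [gn [Hg1 Hg2]].
  - intros m r Hr Hz. specialize (Hd n m r Hr).
    rewrite (fsum_ext m (fun j => h j * r j * b n j) (fun j => r j * (h j * b n j))) in Hd by (intros; ring).
    rewrite Hz, Rabs_R0, Rmult_0_r in Hd. auto.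
  - exists gn. split; auto. destruct (Req_dec gn 0) as [E0|E0]. rewrite E0, Rabs_R0; lra.
    destruct (Hg2 E0) as [j Hj].
    assert (Hsg : forall u, Rabs u <= 1 -> u * a n j <= C * Rabs (u * (h j * b n j))).
    { intros u Hu. specialize (Hd n (S j) (fun k => if Nat.eqb k j then u else 0)). cbv beta in Hd.
      rewrite (fsum_ext (S j) (fun j0 => h j0 * _ * b n j0) (fun k => (if Nat.eqb k j then u else 0) * (h k * b n k))) in Hd by (intros; ring).
      rewrite !fsum_single in Hd by lia. apply Hd. intros k; destruct (Nat.eqb k j); auto; rewrite Rabs_R0; lra. }
    rewrite Hg1 in Hsg.
    assert (H1 := Hsg 1 ltac:(rewrite Rabs_R1; lra)). assert (H2 := Hsg (-1) ltac:(rewrite Rabs_left; lra)).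
    rewrite Rabs_mult, Rabs_R1 in H1. rewrite Rabs_mult, (Rabs_left (-1)) in H2 by lra.
    assert (Hp : 0 < Rabs (h j * b n j)) by (apply Rabs_pos_lt; auto).
    apply Rmult_le_reg_r with (Rabs (h j * b n j)); auto. rewrite <- Rabs_mult.
    destruct (Rle_dec 0 (gn * (h j * b n j))).
    + rewrite Rabs_pos_eq by auto. lra.
    + rewrite Rabs_left by lra. lra.
Qed.

Lemma mat_to_b (a b : nat -> nat -> R) h g : (forall i j, a i j = g i * (h j * b i j)) ->
  forall i j, (b i j <> 0 -> a i j / b i j = g i * h j) /\ (b i j = 0 -> a i j = 0).
Proof. intros H i j. rewrite H. split; intros. field; auto. rewrite H0; ring. Qed.

Lemma b_to_mat (a b : nat -> nat -> R) h g : (forall i j, (b i j <> 0 -> a i j / b i j = g i * h j) /\ (b i j = 0 -> a i j = 0)) ->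
  forall i j, a i j = g i * (h j * b i j).
Proof. intros H i j. destruct (H i j) as [H1 H2]. destruct (Req_dec (b i j) 0) as [E|E].
  rewrite H2, E; auto; ring. specialize (H1 E). replace (a i j) with (a i j / b i j * b i j) by (field; auto). rewrite H1; ring. Qed.

Theorem proposition5p2
  (X1 X2 Y1 Y2 : sspace) (T S : seq -> seq) (h : seq)
  (HX1 : BSS X1) (HX2 : BSS X2) (HY1 : BSS Y1) (HY2 : BSS Y2)
  (sX1 : saturated X1) (sX2 : saturated X2) (sY1 : saturated Y1) (sY2 : saturated Y2)
  (bX1 : schauder_basis X1 unitv) (bX2 : schauder_basis X2 unitv)
  (bY1 : schauder_basis Y1 unitv) (bY2 : schauder_basis Y2 unitv)
  (bY1' : schauder_basis (kothe Y1) unitv)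
  (HT : bounded_linear X1 Y1 T) (HS : bounded_linear X2 Y2 S)
  (nT : nontrivial_op X1 T) (nS : nontrivial_op X2 S)
  (sat_mult : saturated (mult_space Y2 (kothe (kothe Y1))))
  (soc : sigma_order_continuous Y2 \/ sigma_order_continuous (kothe Y1))
  (hh : smem (mult_space X1 X2) h) :
  let a := op_matrix T in
  let b := op_matrix S in
  let G := mult_space Y2 (kothe (kothe Y1)) in
  let cond_a := exists g, smem G g /\
      forall x, smem X1 x -> T x = smul g (S (smul h x)) in
  let cond_b := exists g, smem G g /\
      forall i j, (b i j <> 0 -> a i j / b i j = g i * h j) /\
                  (b i j = 0 -> a i j = 0) in
  let cond_c := exists C, 0 < C /\
      forall (n m : nat) (r : nat -> nat -> R),
        (forall i j, Rabs (r i j) <= 1) ->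
        Rbar_le (Finite (fsum n (fun i => fsum m (fun j => r i j * a i j))))
          (Rbar_mult (Finite C)
             (pi_norm Y2 (kothe Y1)
                (fsum_seq n (fun i => fsum m (fun j => h j * r i j * b i j)) unitv))) in
  let cond_d := exists C, 0 < C /\
      forall (n m : nat) (r : nat -> R),
        (forall j, Rabs (r j) <= 1) ->
        fsum m (fun j => r j * a n j) <= C * Rabs (fsum m (fun j => h j * r j * b n j)) in
  (cond_a <-> cond_b) /\ (cond_b <-> cond_c) /\
  ((forall y, smem Y2 y -> smem (kothe (kothe Y1)) y) ->
     (cond_d -> cond_a) /\
     ((forall g, smem G g <-> exists B, forall i, Rabs (g i) <= B) ->
        (cond_d <-> cond_a))).
Proof.
  cbv zeta.
  pose proof (proj1 bY1) as Hu1. pose proof (proj1 bY2) as Hu2.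
  pose proof (proj1 bX1) as HuX1. pose proof (proj1 bX2) as HuX2.
  assert (AB : (exists g, smem (mult_space Y2 (kothe (kothe Y1))) g /\ forall x, smem X1 x -> T x = smul g (S (smul h x))) <->
               (exists g, smem (mult_space Y2 (kothe (kothe Y1))) g /\ forall i j, (op_matrix S i j <> 0 -> op_matrix T i j / op_matrix S i j = g i * h j) /\ (op_matrix S i j = 0 -> op_matrix T i j = 0))).
  { split.
    - intros [g [Hg HTg]]. exists g. split; auto. apply mat_to_b. apply (mat_of_a X2 Y2 S h g HX2 HS HuX2 X1 HuX1 T HTg).
    - intros [g [Hg Hb]]. exists g. split; auto. apply (a_of_mat X1 X2 Y1 Y2 T S h g HX1 HX2 HY1 HY2 bX1 bX2 Hu1 Hu2 HT HS hh).
      apply b_to_mat; auto. }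
  split; [exact AB|]. split.
  - split.
    + intros [g [Hg Hb]]. apply (b_to_c Y2 Y1 HY1 HY2 Hu1 Hu2 _ _ h g Hg). apply b_to_mat; auto.
    + intros [C [HC Hc]]. destruct (c_rows Y2 Y1 HY2 _ _ h C HC Hc) as [g Hg].
      exists g. split. apply (c_mem Y2 Y1 HY2 _ _ h C HC Hc g Hg). apply mat_to_b. intros; apply Hg.
  - intros Hsub.
    assert (DA : (exists C, 0 < C /\ forall (n m : nat) (r : nat -> R), (forall j, Rabs (r j) <= 1) ->
        fsum m (fun j => r j * op_matrix T n j) <= C * Rabs (fsum m (fun j => h j * r j * op_matrix S n j))) ->
        exists g, smem (mult_space Y2 (kothe (kothe Y1))) g /\ forall x, smem X1 x -> T x = smul g (S (smul h x))).
    { intros [C [HC Hd]]. destruct (d_rows _ _ h C HC Hd) as [g Hg]. apply AB. exists g. split.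
      - intros y Hy z Hz. simpl. unfold smul.
        assert (Hex : ex_series (fun n => C * Rabs (y n * z n))).
        { apply (ex_series_ext (fun n => scal C (Rabs (y n * z n)))). intros; reflexivity.
          exact (@ex_series_scal_l R_AbsRing R_NormedModule C _ (Hsub y Hy z Hz)). }
        refine (proj1 (series_le_gen _ _ _ Hex)).
        intros n. split. apply Rabs_pos. replace (g n * y n * z n) with (g n * (y n * z n)) by ring. rewrite Rabs_mult.
        apply Rmult_le_compat_r. apply Rabs_pos. apply Hg.
      - apply mat_to_b. intros; apply Hg. }
    split; [exact DA|]. intros Hbnd. split; [exact DA|].
    intros Ha. destruct (proj1 AB Ha) as [g [Hg Hb]]. pose proof (b_to_mat _ _ h g Hb) as Hmat.
    destruct (proj1 (Hbnd g) Hg) as [B HB]. exists (Rabs B + 1). split. pose proof (Rabs_pos B); lra.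
    intros n m r Hr. rewrite (fsum_ext m _ (fun j => g n * (h j * r j * op_matrix S n j))) by (intros; rewrite Hmat; ring).
    rewrite fsum_scal. eapply Rle_trans. apply RRle_abs. rewrite Rabs_mult. apply Rmult_le_compat_r. apply Rabs_pos.
    specialize (HB n). pose proof (RRle_abs B). lra.
Qed.
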